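(* Let $q=3^m$ with $m\ge1$. Then $\#\{x\in\mathbb{F}_q^*:\ x,\,x+1,\,x-1\in C_0\}\le \frac{q+2\sqrt{q}+9}{8}$.
   Context: $C_0$ denotes the set of nonzero squares in $\mathbb{F}_q^*$. *)

(* Defs.v *)
From HB Require Import structures.
From mathcomp Require Import all_boot all_order all_algebra all_field.
Set Implicit Arguments. Unset Strict Implicit. Unset Printing Implicit Defensive.
Import Order.TTheory GRing.Theory Num.Theory.
Local Open Scope ring_scope.

Definition C0 (F : finFieldType) : {set F} :=
  [set x : F | (x != 0) && [exists y : F, y ^+ 2 == x]].

Definition triple_sq_set (F : finFieldType) : {set F} :=
  [set x : F | [&& x != 0, x \in C0 F, (x + 1) \in C0 F & (x - 1) \in C0 F]].

(* Main.v *)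
Require Import Defs.
From HB Require Import structures.
From mathcomp Require Import all_boot all_order all_algebra all_field.
From mathcomp Require Import ring zify lra.
Import Order.TTheory GRing.Theory Num.Theory.
Local Open Scope ring_scope.

Definition qchi (F : finFieldType) (x : F) : int :=
  if x == 0 then 0 else if x \in C0 F then 1 else -1.
Arguments qchi {F}.

Lemma two_neq {F : finFieldType} (w : F) : (3%:R : F) = 0 -> w = - w -> w = 0.
Proof.
move=> h3 e. have : w *+ 3 = 0 by rewrite -mulr_natr h3 mulr0.
by rewrite mulrS mulrS mulr1n {3}e subrr addr0.
Qed.

Lemma sq_inC0 (F : finFieldType) (y : F) : y != 0 -> y^+2 \in C0 F.
Proof. move=> hy; rewrite inE sqrf_eq0 hy /=; apply/existsP; by exists y. Qed.

Lemma r_eta {F : finFieldType} (y : F) : (3%:R : F) = 0 ->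
  (#|[set z : F | z^+2 == y]|%:Z = 1 + qchi y).
Proof.
move=> h3; rewrite /qchi; case: eqP => [->|/eqP y0].
  have -> : [set z : F | z^+2 == 0] = [set 0] by apply/setP=> z; rewrite !inE sqrf_eq0.
  by rewrite cards1 addr0.
case: ifP => hC.
  move: hC; rewrite inE y0 /= => /existsP [w /eqP hw].
  have -> : [set z : F | z^+2 == y] = [set w; -w].
    by apply/setP=> z; rewrite !inE -hw eqf_sqr.
  rewrite cards2; case: eqP => [e|//]. 
  by move: y0; rewrite -hw (two_neq _ h3 e) expr0n eqxx.
have -> : [set z : F | z^+2 == y] = set0.
  apply/setP=> z; rewrite !inE; apply/negP => /eqP hz.
  have z0 : z != 0 by apply: contra y0 => /eqP z0; rewrite -hz z0 expr0n.
  by move: hC; rewrite -hz sq_inC0.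
by rewrite cards0.
Qed.

Lemma fiber_sum {F : finFieldType} (f : F -> F) : (\sum_y #|[set x | f x == y]| = #|F|)%N.
Proof.
rewrite -sum1_card.
under eq_bigr => y _ do rewrite -sum1_card big_mkcond /=.
rewrite exchange_big /=. apply: eq_bigr => x _.
rewrite (bigD1 (f x)) //= big1 ?inE ?eqxx ?addn0 // => y /negbTE hy.
by rewrite inE eq_sym hy.
Qed.

Lemma sum_eta {F : finFieldType} : (3%:R : F) = 0 -> \sum_(y : F) qchi y = 0.
Proof.
move=> h3.
have := congr1 (fun n : nat => n%:Z) (fiber_sum (fun z : F => z^+2)).
rewrite -!natz natr_sum /=. under eq_bigr => y _ do rewrite natz r_eta //.
rewrite big_split /= sumr_const => h.
by apply: (addrI (#|F|%:R : int)); rewrite addr0 -[RHS]h.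
Qed.

Definition NS (F : finFieldType) : {set F} := [set y : F | (y != 0) && (y \notin C0 F)].

Lemma NSE {F : finFieldType} (y : F) : (y \in NS F) = (y != 0) && (y \notin C0 F).
Proof. exact: in_set. Qed.

Lemma C0P {F : finFieldType} (x : F) : reflect (exists2 s, s != 0 & x = s^+2) (x \in C0 F).
Proof.
apply: (iffP idP).
  rewrite inE => /andP [x0 /existsP [s /eqP hs]]; exists s => //.
  by apply: contra x0 => /eqP s0; rewrite -hs s0 expr0n.
by move=> [s s0 ->]; apply: sq_inC0.
Qed.

Lemma C0_neq0 {F : finFieldType} (x : F) : x \in C0 F -> x != 0.
Proof. by rewrite inE => /andP []. Qed.
Arguments C0_neq0 {F x}.

Lemma C0M {F : finFieldType} (x y : F) : x \in C0 F -> y \in C0 F -> x * y \in C0 F.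
Proof.
move=> hx hy; case/C0P: hx => s s0 ->; case/C0P: hy => t t0 ->; apply/C0P; exists (s * t).
  by rewrite mulf_neq0. by rewrite exprMn.
Qed.

Lemma C0NS {F : finFieldType} (x y : F) : x \in C0 F -> y \in NS F -> x * y \in NS F.
Proof.
move=> hx; rewrite !NSE => /andP [y0 hy].
have x0 := C0_neq0 hx.
rewrite (mulf_neq0 x0 y0) /=.
apply: contra hy => hu'; case/C0P: hu' => u u0 hu; case/C0P: hx => s s0 hs.
apply/C0P; exists (u / s); first by rewrite mulf_neq0 ?invr_eq0.
by rewrite expr_div_n -hu hs [s^+2 * _]mulrC mulfK // expf_neq0.
Qed.

Lemma sum_nat_in {F : finFieldType} (A : {set F}) : \sum_(y : F) ((y \in A : nat)%:Z) = #|A|%:Z.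
Proof.
rewrite -sum1_card big_mkcond /= -natz natr_sum.
rewrite [RHS]big_mkcond; apply: eq_bigr => y _; by case: (y \in A).
Qed.

Lemma card_C0_NS {F : finFieldType} : (3%:R : F) = 0 -> #|C0 F| = #|NS F|.
Proof.
move=> h3; have := sum_eta h3.
have -> : \sum_(y : F) qchi y = \sum_(y : F) (((y \in C0 F : nat)%:Z) - ((y \in NS F : nat)%:Z)).
  have c00 : ((0:F) \in C0 F) = false by rewrite inE eqxx.
  apply: eq_bigr => y _; rewrite /qchi NSE; case: (eqVneq y 0) => [->|y0] /=.
    by rewrite c00.
  by case: (y \in C0 F).
rewrite big_split /= sumrN !sum_nat_in => /eqP; rewrite subr_eq0 => /eqP [].
done.
Qed.

Lemma NSNS {F : finFieldType} (a n : F) : (3%:R : F) = 0 -> a \in NS F -> n \in NS F -> a * n \in C0 F.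
Proof.
move=> h3 ha hn.
have a0 : a != 0 by move: ha; rewrite NSE => /andP [].
have sub : (fun s => a * s) @: C0 F \subset NS F.
  apply/subsetP => y /imsetP [s hs ->]; rewrite mulrC; exact: C0NS.
have : (fun s => a * s) @: C0 F == NS F.
  by rewrite eqEcard sub /= card_imset ?card_C0_NS //; apply: mulfI.
move=> /eqP E; move: hn; rewrite -E => /imsetP [s hs ->]; case/C0P: hs => t t0 ->.
apply/C0P; exists (a * t); first by rewrite mulf_neq0.
by rewrite exprMn mulrA -expr2.
Qed.

Lemma etaM {F : finFieldType} (x y : F) : (3%:R : F) = 0 -> qchi (x * y) = qchi x * qchi y.
Proof.
move=> h3.
have cases : forall z : F, [\/ z = 0, z \in C0 F | z \in NS F].
  move=> z; case: (eqVneq z 0) => [->|z0]; first by constructor 1.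
  case hz: (z \in C0 F); first by constructor 2.
  by constructor 3; rewrite NSE z0 hz.
have e0 : qchi (0 : F) = 0 by rewrite /qchi eqxx.
have e1 : forall z : F, z \in C0 F -> qchi z = 1.
  by move=> z hz; rewrite /qchi (negbTE (C0_neq0 hz)) hz.
have e2 : forall z : F, z \in NS F -> qchi z = -1.
  by move=> z; rewrite NSE /qchi => /andP [/negbTE -> /negbTE ->].
case: (cases x) => [->|hx|hx]; first by rewrite mul0r e0 mul0r.
  case: (cases y) => [->|hy|hy]; first by rewrite mulr0 e0 mulr0.
    by rewrite (e1 x hx) (e1 y hy) (e1 (x*y)) ?mulr1 // C0M.
  by rewrite (e1 x hx) (e2 y hy) (e2 (x*y)) ?mul1r // C0NS.
case: (cases y) => [->|hy|hy]; first by rewrite mulr0 e0 mulr0.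
  by rewrite (e2 x hx) (e1 y hy) (e2 (x*y)) ?mulr1 // mulrC C0NS.
by rewrite (e2 x hx) (e2 y hy) mulrNN mulr1 e1 // NSNS.
Qed.

Lemma eta_sq {F : finFieldType} (x : F) : x != 0 -> qchi (x^+2) = 1.
Proof. by move=> x0; rewrite /qchi sqrf_eq0 (negbTE x0) sq_inC0. Qed.

Lemma eta1 {F : finFieldType} : qchi (1 : F) = 1.
Proof. by rewrite -(expr1n F 2) eta_sq ?oner_neq0. Qed.

Lemma shift_sum {F : finFieldType} (f : F -> int) (c : F) : \sum_x f (x + c) = \sum_x f x.
Proof. symmetry; exact: (reindex_inj (addIr c)). Qed.

Lemma pair_sum {F : finFieldType} (a : F) : (3%:R : F) = 0 -> a != 0 ->
  \sum_x qchi x * qchi (x + a) = -1.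
Proof.
move=> h3 a0.
have E : forall x : F, qchi x * qchi (x + a) = qchi (1 + a * x^-1) - ((x == 0 : nat)%:Z).
  move=> x; case: (eqVneq x 0) => [->|x0].
    by rewrite /= invr0 mulr0 addr0 eta1 {1}/qchi eqxx mul0r subrr.
  rewrite /= subr0 -etaM //.
  have -> : x * (x + a) = x^+2 * (1 + a * x^-1) by field.
  by rewrite etaM // eta_sq // mul1r.
rewrite (eq_bigr _ (fun x _ => E x)) sumrB.
have hinj : injective (fun x : F => 1 + a * x^-1).
  by move=> x y /addrI /(mulfI a0) /invr_inj.
have -> : \sum_(x : F) qchi (1 + a * x^-1) = \sum_(x : F) qchi x.
  symmetry; exact: (reindex_inj hinj).
rewrite sum_eta // sub0r (bigD1 0) //= big1 ?addr0 ?eqxx // => x /negbTE -> //.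
Qed.

Lemma expand {F : finFieldType} : (3%:R : F) = 0 ->
  \sum_(x : F) (1 + qchi x) * (1 + qchi (x + 1)) * (1 + qchi (x - 1))
  = #|F|%:R - 3 + \sum_(x : F) qchi (x^+3 - x).
Proof.
move=> h3.
have E : forall x : F, (1 + qchi x) * (1 + qchi (x + 1)) * (1 + qchi (x - 1)) =
  1 + qchi x + qchi (x + 1) + qchi (x - 1) + qchi x * qchi (x + 1) + qchi x * qchi (x + (-1))
  + qchi (x + 1) * qchi ((x + 1) + 1) + qchi (x^+3 - x).
  move=> x.
  have -> : x + 1 + 1 = x - 1.
    apply/eqP; rewrite -subr_eq0.
    have -> : x + 1 + 1 - (x - 1) = 3%:R by ring.
    by rewrite h3.
  have -> : qchi (x^+3 - x) = qchi x * qchi (x + 1) * qchi (x - 1).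
    rewrite -!etaM //; congr qchi; ring.
  ring.
rewrite (eq_bigr _ (fun x _ => E x)) !big_split /=.
rewrite sumr_const sum_eta // (shift_sum qchi) (shift_sum qchi) sum_eta //.
rewrite pair_sum ?oner_neq0 // pair_sum ?oppr_eq0 ?oner_neq0 //.
rewrite (shift_sum (fun y => qchi y * qchi (y + 1))) pair_sum ?oner_neq0 //.
have -> : #|(xpredT : pred F)| = #|F| by [].
ring.
Qed.

Lemma frob3 {F : finFieldType} (x y : F) : (3%:R : F) = 0 -> (x - y)^+3 = x^+3 - y^+3.
Proof.
move=> h3. have -> : (x-y)^+3 = x^+3 - y^+3 + 3%:R * (x*y^+2 - x^+2*y) by ring.
by rewrite h3 mul0r addr0.
Qed.

Lemma char3_of (F : finFieldType) (m : nat) : (1 <= m)%N -> #|F| = (3 ^ m)%N -> (3%:R : F) = 0.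
Proof.
move=> hm hq. have := card_finPcharP hq isT. by case/andP=> _ /eqP.
Qed.

Definition Lf {F : finFieldType} (x : F) : F := x^+3 - x.
Definition Im3 (F : finFieldType) : {set F} := [set Lf x | x : F].

Lemma Lf_sub {F : finFieldType} (x y : F) : (3%:R : F) = 0 -> Lf (x - y) = Lf x - Lf y.
Proof. move=> h3; rewrite /Lf frob3 //; ring. Qed.

Lemma Im3_sub {F : finFieldType} (y y' : F) : (3%:R : F) = 0 -> y \in Im3 F -> y' \in Im3 F -> y - y' \in Im3 F.
Proof.
move=> h3 /imsetP [x _ ->] /imsetP [x' _ ->]; apply/imsetP; exists (x - x') => //.
by rewrite Lf_sub.
Qed.

Lemma Im3_0 {F : finFieldType} : (0 : F) \in Im3 F.
Proof. apply/imsetP; exists 0 => //; by rewrite /Lf expr0n subrr. Qed.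

Lemma one_neq_m1 {F : finFieldType} : (3%:R : F) = 0 -> (1 : F) != -1.
Proof. move=> h3; apply/eqP => e; have := two_neq _ h3 e; apply/eqP; exact: oner_neq0. Qed.

Lemma fiberL {F : finFieldType} (y : F) : (3%:R : F) = 0 ->
  #|[set x | Lf x == y]| = (3 * (y \in Im3 F))%N.
Proof.
move=> h3; case: (boolP (y \in Im3 F)) => hy /=.
  case/imsetP: hy => x0 _ ->.
  have -> : [set x | Lf x == Lf x0] = [set x0; x0 + 1; x0 - 1].
    apply/setP => x; rewrite !inE.
    have -> : (Lf x == Lf x0) = ((x - x0) * (x - x0 - 1) * (x - x0 + 1) == 0).
      rewrite -subr_eq0 -Lf_sub //; congr (_ == 0); rewrite /Lf; ring.
    rewrite !mulf_eq0 !subr_eq0 -!orbA.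
    by rewrite [_ + 1 == 0]addr_eq0 !subr_eq [1 + x0]addrC [-1 + x0]addrC.
  have -> : [set x0; x0 + 1; x0 - 1] = x0 |: [set x0 + 1; x0 - 1].
    by apply/setP => x; rewrite !inE; case: (x == x0); case: (x == x0 + 1).
  rewrite cardsU1 cards2 !inE.
  have n1 : (x0 == x0 + 1) = false.
    by apply/negbTE; rewrite eq_sym -subr_eq0 addrAC subrr add0r oner_neq0.
  have n2 : (x0 == x0 - 1) = false.
    by apply/negbTE; rewrite -subr_eq0 opprB addrC subrK oner_neq0.
  have n3 : (x0 + 1 == x0 - 1) = false.
    by apply/negbTE; rewrite (inj_eq (addrI x0)) one_neq_m1.
  by rewrite n1 n2 n3.
have -> : [set x | Lf x == y] = set0.
  apply/setP=> x; rewrite !inE; apply/negP=> /eqP e; move: hy.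
  by rewrite -e; move/negP; apply; apply/imsetP; exists x.
by rewrite cards0 muln0.
Qed.

Lemma card_sum {T : finType} (P : pred T) : #|[set x | P x]| = (\sum_x (P x : nat))%N.
Proof.
rewrite -sum1_card big_mkcond /=; apply: eq_bigr => x _; rewrite inE; by case: (P x).
Qed.

Lemma card_Im3 {F : finFieldType} : (3%:R : F) = 0 -> (3 * #|Im3 F| = #|F|)%N.
Proof.
move=> h3; rewrite -(fiber_sum Lf); under eq_bigr => y _ do rewrite fiberL //.
rewrite -big_distrr /=; congr (_ * _)%N.
rewrite -(card_sum (fun y => y \in Im3 F)); apply: eq_card => y; by rewrite inE.
Qed.

Lemma n0_count {F : finFieldType} : (3%:R : F) = 0 ->
  (\sum_(x : F) #|[set z : F | z^+2 == Lf x]| = 3 * #|[set z : F | z^+2 \in Im3 F]|)%N.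
Proof.
move=> h3.
under eq_bigr => x _ do rewrite card_sum.
rewrite exchange_big /= card_sum big_distrr /=; apply: eq_bigr => z _.
by rewrite -fiberL // card_sum; apply: eq_bigr => x _; rewrite eq_sym.
Qed.

Lemma pair_count {F : finFieldType} : (3%:R : F) = 0 ->
  (\sum_(z : F) \sum_(w : F) ((z^+2 - w^+2)%R \in Im3 F : nat) = #|F| + (#|F|.-1) * #|Im3 F|)%N.
Proof.
move=> h3.
rewrite pair_big /=.
have hinj : injective (fun p : F * F => (-(p.1 + p.2), p.1 - p.2)).
  move=> [u v] [u' v'] /= [] /eqP e1 /eqP e2.
  rewrite eqr_opp in e1.
  have : (u + v) + (u - v) == (u' + v') + (u' - v') by rewrite (eqP e1) (eqP e2).
  have E : forall a b : F, (a + b) + (a - b) = - a + 3%:R * a by move=> a b; ring.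
  rewrite !E h3 !mul0r !addr0 eqr_opp => /eqP eu; subst u'.
  by move: e2; rewrite (inj_eq (addrI u)) eqr_opp => /eqP ->.
rewrite (reindex_inj hinj) /=.
have E : forall u v : F, (-(u+v))^+2 - (u-v)^+2 = u * v.
  move=> u v; have -> : (-(u+v))^+2 - (u-v)^+2 = u*v + 3%:R*(u*v) by ring.
  by rewrite h3 mul0r addr0.
under eq_bigr => p _ do rewrite E.
rewrite -(pair_big xpredT xpredT (fun u v : F => (u * v \in Im3 F : nat))) /=.
rewrite (bigD1 0) //=; congr (_ + _)%N.
  under eq_bigr => v _ do rewrite mul0r Im3_0.
  by rewrite sum1_card.
rewrite (eq_bigr (fun _ => #|Im3 F|)).
  rewrite sum_nat_const -(cardC1 (0:F)); congr (_ * _)%N; by apply: eq_card.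
move=> u u0; rewrite -(card_sum (fun v => u * v \in Im3 F)).
  have -> : [set v | u * v \in Im3 F] = [set u^-1 * y | y in Im3 F].
    apply/setP => v; rewrite inE; apply/idP/imsetP.
      by move=> hv; exists (u * v) => //; rewrite mulKf.
    by move=> [y hy ->]; rewrite mulVKf.
  by rewrite card_imset //; apply: mulfI; rewrite invr_eq0.
Qed.

Lemma Im3_opp {F : finFieldType} (y : F) : (3%:R : F) = 0 -> y \in Im3 F -> - y \in Im3 F.
Proof. by move=> h3 hy; rewrite -sub0r Im3_sub // Im3_0. Qed.

Lemma Im3_add {F : finFieldType} (y y' : F) : (3%:R : F) = 0 -> y \in Im3 F -> y' \in Im3 F -> y + y' \in Im3 F.
Proof. by move=> h3 hy hy'; rewrite -[y']opprK Im3_sub // Im3_opp. Qed.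

Lemma exists_a {F : finFieldType} : (3%:R : F) = 0 -> exists a : F, a \notin Im3 F.
Proof.
move=> h3; case: (pickP (fun a : F => a \notin Im3 F)) => [a ha|H]; first by exists a.
have E : Im3 F = setT by apply/setP => y; rewrite inE; move: (H y) => /negbFE.
have := card_Im3 h3; rewrite E cardsT.
have : (0 < #|F|)%N by apply/card_gt0P; exists 0.
move=> hpos h; exfalso; move: h hpos; set k := #|F|; lia.
Qed.

Lemma cover {F : finFieldType} (a y : F) : (3%:R : F) = 0 -> a \notin Im3 F ->
  [|| y \in Im3 F, y - a \in Im3 F | y + a \in Im3 F].
Proof.
move=> h3 ha.
pose A1 := [set t + a | t in Im3 F]; pose A2 := [set t - a | t in Im3 F].
have m1 : forall y, (y \in A1) = (y - a \in Im3 F).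
  move=> z; apply/imsetP/idP => [[t ht ->]|hz]; first by rewrite addrK.
  by exists (z - a) => //; rewrite subrK.
have m2 : forall y, (y \in A2) = (y + a \in Im3 F).
  move=> z; apply/imsetP/idP => [[t ht ->]|hz]; first by rewrite subrK.
  by exists (z + a) => //; rewrite addrK.
have c1 : #|A1| = #|Im3 F| by rewrite card_imset //; apply: addIr.
have c2 : #|A2| = #|Im3 F| by rewrite card_imset //; apply: addIr.
have d1 : Im3 F :&: A1 = set0.
  apply/setP => z; rewrite !inE m1; apply/negP => /andP [h1 h2].
  have : z - (z - a) \in Im3 F by apply: Im3_sub.
  by rewrite opprB addrC subrK (negbTE ha).
have d2 : (Im3 F :|: A1) :&: A2 = set0.
  apply/setP => z; rewrite !inE m1 m2; apply/negP => /andP [/orP [h1|h1] h2].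
    have : (z + a) - z \in Im3 F by apply: Im3_sub.
    by rewrite addrC addKr (negbTE ha).
  have : - ((z + a) - (z - a)) \in Im3 F by apply: Im3_opp => //; apply: Im3_sub.
  have -> : - ((z + a) - (z - a)) = a - 3%:R * a by ring.
  by rewrite h3 mul0r subr0 (negbTE ha).
have cU : #|Im3 F :|: A1 :|: A2| = #|F|.
  rewrite cardsU d2 cards0 subn0 cardsU d1 cards0 subn0 c1 c2 -(card_Im3 h3).
  lia.
have : y \in Im3 F :|: A1 :|: A2.
  have -> : Im3 F :|: A1 :|: A2 = setT.
    by apply/eqP; rewrite eqEcard subsetT cardsT cU leqnn.
  by rewrite inE.
by rewrite !inE m1 m2 -orbA.
Qed.

Definition cl {F : finFieldType} (a y : F) : nat :=
  if y \in Im3 F then 0%N else if y - a \in Im3 F then 1%N else 2%N.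
Definition sh {F : finFieldType} (a : F) (k : nat) : F :=
  match k with O => 0 | S O => a | _ => - a end.

Lemma cl_le {F : finFieldType} (a y : F) : (cl a y < 3)%N.
Proof. by rewrite /cl; case: ifP => // _; case: ifP. Qed.

Lemma cl_spec {F : finFieldType} (a y : F) : (3%:R : F) = 0 -> a \notin Im3 F ->
  y - sh a (cl a y) \in Im3 F.
Proof.
move=> h3 ha; rewrite /cl; case: ifP => h0; first by rewrite /= subr0.
case: ifP => h1 //=. by move: (cover a y h3 ha); rewrite h0 h1 /= opprK.
Qed.

Lemma cl_eq {F : finFieldType} (a y y' : F) : (3%:R : F) = 0 -> a \notin Im3 F ->
  (y - y' \in Im3 F) = (cl a y == cl a y').
Proof.
move=> h3 ha.
have key : forall s s' : F, y - s \in Im3 F -> y' - s' \in Im3 F ->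
    (y - y' \in Im3 F) = (s - s' \in Im3 F).
  move=> s s' h1 h2; apply/idP/idP => h.
    have -> : s - s' = (y - y') - ((y - s) - (y' - s')) by ring.
    by apply: Im3_sub => //; apply: Im3_sub.
  have -> : y - y' = ((y - s) - (y' - s')) + (s - s') by ring.
  by apply: Im3_add => //; apply: Im3_sub.
rewrite (key _ _ (cl_spec a y h3 ha) (cl_spec a y' h3 ha)).
have na : (- a \in Im3 F) = false.
  apply/negbTE; apply: contra ha => h; by rewrite -[a]opprK Im3_opp.
have nb : (a \in Im3 F) = false by apply/negbTE.
move: (cl_le a y) (cl_le a y').
case: (cl a y) => [|[|[|//]]]; case: (cl a y') => [|[|[|//]]] _ _ /=;
  rewrite ?subrr ?sub0r ?subr0 ?opprK ?Im3_0 ?na ?nb //.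
  have -> : a + a = - a + 3%:R * a by ring.
  by rewrite h3 mul0r addr0 na.
have -> : - a - a = a - 3%:R * a by ring.
by rewrite h3 mul0r subr0 nb.
Qed.

Definition nk {F : finFieldType} (a : F) (k : nat) : nat := #|[set z : F | cl a (z^+2) == k]|.

Lemma sumsq {F : finFieldType} (a : F) : (3%:R : F) = 0 -> a \notin Im3 F ->
  (\sum_(z : F) \sum_(w : F) ((z^+2 - w^+2)%R \in Im3 F : nat)
   = nk a 0 * nk a 0 + nk a 1 * nk a 1 + nk a 2 * nk a 2)%N.
Proof.
move=> h3 ha.
have E : forall z : F, (\sum_(w : F) ((z^+2 - w^+2)%R \in Im3 F : nat)
   = (cl a (z^+2) == 0%N) * nk a 0 + (cl a (z^+2) == 1%N) * nk a 1 + (cl a (z^+2) == 2%N) * nk a 2)%N.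
  move=> z; under eq_bigr => w _ do rewrite (cl_eq a _ _ h3 ha).
  rewrite /nk; move: (cl_le a (z^+2)).
  case: (cl a (z^+2)) => [|[|[|//]]] _ /=; rewrite ?mul0n ?mul1n ?addn0 ?add0n card_sum;
    by apply: eq_bigr => w _; rewrite eq_sym.
rewrite (eq_bigr _ (fun z _ => E z)) !big_split /= -!big_distrl /=.
by rewrite /nk !card_sum.
Qed.

Lemma sum3 {F : finFieldType} (a : F) : (nk a 0 + nk a 1 + nk a 2 = #|F|)%N.
Proof.
rewrite /nk !card_sum -!big_split /=.
have -> : #|F| = #|[set _ : F | true]| by rewrite -cardsT; apply: eq_card => x; rewrite !inE.
rewrite card_sum; apply: eq_bigr => z _.
by move: (cl_le a (z^+2)); case: (cl a (z^+2)) => [|[|[|//]]].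
Qed.

Lemma n0_eq {F : finFieldType} (a : F) : nk a 0 = #|[set z : F | z^+2 \in Im3 F]|.
Proof.
rewrite /nk; apply: eq_card => z; rewrite !inE /cl.
by case: ifP => // _; case: ifP.
Qed.

Lemma eta_ge {F : finFieldType} (x : F) : -1 <= qchi x.
Proof. by rewrite /qchi; case: ifP => _ //; case: ifP. Qed.

Lemma eta_C0 {F : finFieldType} (x : F) : x \in C0 F -> qchi x = 1.
Proof. by move=> hx; rewrite /qchi (negbTE (C0_neq0 hx)) hx. Qed.

Lemma step1 {F : finFieldType} : (3%:R : F) = 0 ->
  (8 * #|triple_sq_set F|)%:Z <= #|F|%:R - 3 + \sum_(x : F) qchi (x^+3 - x).
Proof.
move=> h3; rewrite -expand //.
have -> : (8 * #|triple_sq_set F|)%:Z = \sum_(x : F) 8 * ((x \in triple_sq_set F : nat)%:Z).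
  by rewrite -mulr_sumr sum_nat_in PoszM.
apply: ler_sum => x _.
case: (boolP (x \in triple_sq_set F)) => hx /=.
  move: hx; rewrite inE => /and4P [_ h0 h1 h2].
  by rewrite !eta_C0.
rewrite mulr0 !mulr_ge0 //; rewrite -lerBlDl sub0r; exact: eta_ge.
Qed.

Lemma step2 {F : finFieldType} : (3%:R : F) = 0 ->
  #|F|%:R + \sum_(x : F) qchi (x^+3 - x) = (3 * #|[set z : F | z^+2 \in Im3 F]|)%:Z.
Proof.
move=> h3; rewrite -n0_count // -natz natr_sum /=.
have -> : #|F|%:R = \sum_(x : F) (1 : int) by rewrite sumr_const.
rewrite -big_split /=; apply: eq_bigr => x _.
by rewrite natz r_eta.
Qed.

Lemma int_bound (q i n0 n1 n2 N0 T : nat) (S : int) :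
  (3 * i = q)%N -> (n0 * n0 + n1 * n1 + n2 * n2 = q + q.-1 * i)%N ->
  (n0 + n1 + n2 = q)%N -> n0 = N0 -> q%:Z + S = (3 * N0)%N%:Z ->
  S * S <= 4 * q%:Z.
Proof.
move=> h1 h2 h3 h4 h5.
have hq : q%:Z + S = (3 * n0)%N%:Z by rewrite h4.
have eS : S = 2 * n0%:Z - n1%:Z - n2%:Z.
  apply: (addrI q%:Z); rewrite hq -h3 !PoszD; ring.
have hq0 : (0 < q)%N \/ q = 0%N by lia.
case: hq0 => [hq0|hq0].
  have e2 : (n0%:Z * n0%:Z + n1%:Z * n1%:Z + n2%:Z * n2%:Z) * 3 = q%:Z * q%:Z + 2 * q%:Z.
    have : (3 * (n0 * n0 + n1 * n1 + n2 * n2) = q * q + 2 * q)%N.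
      rewrite h2 mulnDr mulnCA h1. destruct q; first by []. simpl. lia.
    lia.
  have e3 : q%:Z = n0%:Z + n1%:Z + n2%:Z by rewrite -h3 !PoszD.
  rewrite eS.
  have sq : 0 <= 3 * ((n1%:Z - n2%:Z) * (n1%:Z - n2%:Z)) by rewrite mulr_ge0 // -expr2 sqr_ge0.
  rewrite e3 in e2 *.
  set a := n0%:Z in e2 sq *; set b := n1%:Z in e2 sq *; set c := n2%:Z in e2 sq *.
  have -> : 4 * (a + b + c) = (2 * a - b - c) * (2 * a - b - c) + 3 * ((b - c) * (b - c))
      + 2 * ((a + b + c) * (a + b + c) + 2 * (a + b + c) - (a * a + b * b + c * c) * 3).
    ring.
  by rewrite e2 subrr mulr0 addr0 lerDl.
subst q. have : n0 = 0%N by lia. have : n1 = 0%N by lia. have : n2 = 0%N by lia.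
move=> e2 e1 e0; rewrite eS e0 e1 e2; lia.
Qed.

Lemma alg_final (T q : nat) (S : int) :
  (8 * T)%N%:Z <= q%:R - 3 + S -> S * S <= 4 * q%:Z ->
  (T%:R : algC) <= (q%:R + 2 * sqrtC q%:R + 9) / 8.
Proof.
move=> h1 h2.
have hS : (S%:~R : algC) <= 2 * sqrtC q%:R.
  case: (lerP S 0) => hs.
    apply: (le_trans (y := 0)); first by rewrite lerz0.
    by rewrite mulr_ge0 // sqrtC_ge0 ler0n.
  have -> : (S%:~R : algC) = sqrtC ((S * S)%:~R).
    by rewrite intrM -expr2 sqrCK // ler0z ltW.
  have -> : 2 * sqrtC (q%:R : algC) = sqrtC ((4 * q%:Z)%:~R).
    rewrite -[LHS]sqrCK ?mulr_ge0 ?sqrtC_ge0 ?ler0n //.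
    by rewrite exprMn sqrtCK intrM -!pmulrn expr2 -natrM.
  have hx : ((S * S)%:~R : algC) \in Num.nneg by rewrite qualifE /= ler0z -expr2 sqr_ge0.
  have hy : ((4 * q%:Z)%:~R : algC) \in Num.nneg by rewrite qualifE /= ler0z mulr_ge0.
  by rewrite (ler_sqrtC hx hy) ler_int.
have h1' : ((8 * T)%N%:Z%:~R : algC) <= (q%:R - 3 + S : int)%:~R by rewrite ler_int.
rewrite ler_pdivlMr ?ltr0n //.
move: h1'; rewrite !intrD intrN /= => h1'.
apply: (le_trans (y := q%:R - 3 + S%:~R)).
  by move: h1'; rewrite natz -!pmulrn natrM mulrC.
rewrite -!addrA lerD2l addrC lerD //.
by rewrite (le_trans (y := 0)) // oppr_le0 ler0n.
Qed.

Theorem lemma5 (F : finFieldType) (m : nat) (hm : (1 <= m)%N)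
    (hq : #|F| = (3 ^ m)%N) :
  (#|triple_sq_set F|%:R : algC)
    <= ((3 ^ m)%:R + 2 * sqrtC (3 ^ m)%:R + 9) / 8.
Proof.
have h3 := char3_of F m hm hq.
case: (exists_a h3) => a ha.
rewrite -hq; apply: alg_final (step1 h3) _.
have hP := pair_count h3; rewrite (sumsq a h3 ha) in hP.
have s2 := step2 h3; rewrite natz in s2.
have := @int_bound #|F| #|Im3 F| (nk a 0) (nk a 1) (nk a 2)
          #|[set z : F | z^+2 \in Im3 F]| 0%N _ (card_Im3 h3) hP (sum3 a) (n0_eq a) s2.
by [].
Qed.
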